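(* For all $\tau>0$ and all $\lambda,\lambda'\in\mathbb{R}^m_+$, $$\max_{s\in\mathcal S}\bigl\|\pi^*_{\tau,\lambda}(\cdot\mid s)-\pi^*_{\tau,\lambda'}(\cdot\mid s)\bigr\|_1\le\frac{R_{\max}}{(1-\gamma)\tau}\|\lambda-\lambda'\|_2.$$
   Context: Finite MDP with state space $\mathcal S$, action space $\mathcal A$, transition kernel $\mathrm P$, discount $\gamma\in(0,1)$, positive finite rewards $r_0,r_1,\dots,r_m:\mathcal S\times\mathcal A\to(0,\infty)$, $r_{i,\max}=\max_{s,a}r_i(s,a)$, $R_{\max}=\sqrt{\sum_{i=1}^mr_{i,\max}^2}$. For $\lambda\in\mathbb{R}^m_+$ let $r_\lambda=r_0+\sum_{i=1}^m\lambda_ir_i$. For $\tau>0$ and a stationary policy $\pi$, the entropy-regularized value is $V^\pi_{\tau,\lambda}(s)=\mathbb{E}[\sum_{t\ge0}\gamma^t(r_\lambda(s_t,a_t)-\tau\log\pi(a_t\mid s_t))\mid s_0=s]$ with $a_t\sim\pi(\cdot\mid s_t)$, $s_{t+1}\sim\mathrm P(\cdot\mid s_t,a_t)$. There is a unique stationary policy maximizing $V^\pi_{\tau,\lambda}(s)$ simultaneously for all $s\in\mathcal S$; it is denoted $\pi^*_{\tau,\lambda}$ (the optimal policy of the entropy-regularized MDP with reward $r_\lambda$). *)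

(* Defs.v *)
From HB Require Import structures.
From mathcomp Require Import all_boot all_order all_algebra.
From mathcomp Require Import all_classical all_reals all_analysis.
Set Implicit Arguments. Unset Strict Implicit. Unset Printing Implicit Defensive.
Import Order.TTheory GRing.Theory Num.Theory.
Import numFieldNormedType.Exports.
Local Open Scope ring_scope.

Section MDP.
Variables (R : realType) (S A : finType).

Definition is_kernel (P : S -> A -> S -> R) : Prop :=
  (forall s a s', 0 <= P s a s') /\ (forall s a, \sum_(s' : S) P s a s' = 1).

Definition is_policy (pi : S -> A -> R) : Prop :=
  (forall s a, 0 <= pi s a) /\ (forall s, \sum_(a : A) pi s a = 1).

Definition rlam (m : nat) (r0 : S -> A -> R) (r : 'I_m -> S -> A -> R)
  (lam : 'I_m -> R) (s : S) (a : A) : R :=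
  r0 s a + \sum_(i < m) lam i * r i s a.

(* one-step expected regularized reward under pi:
   E_{a ~ pi(.|s)} [ r(s,a) - tau log pi(a|s) ]  (convention 0 log 0 = 0, as ln 0 = 0) *)
Definition reg_reward (tau : R) (rw : S -> A -> R) (pi : S -> A -> R) (s : S) : R :=
  \sum_(a : A) pi s a * (rw s a - tau * ln (pi s a)).

Fixpoint state_dist (P : S -> A -> S -> R) (pi : S -> A -> R) (s0 : S) (t : nat)
  : S -> R :=
  match t with
  | 0 => fun s => if s == s0 then 1 else 0
  | t'.+1 => fun s' =>
      \sum_(s : S) state_dist P pi s0 t' s * \sum_(a : A) pi s a * P s a s'
  end.

Definition reg_value (P : S -> A -> S -> R) (gamma tau : R) (rw : S -> A -> R)
  (pi : S -> A -> R) (s0 : S) : R :=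
  limn (series (fun t : nat => gamma ^+ t *
     \sum_(s : S) state_dist P pi s0 t s * reg_reward tau rw pi s)).

Definition reg_optimal (P : S -> A -> S -> R) (gamma tau : R) (rw : S -> A -> R)
  (pi : S -> A -> R) : Prop :=
  is_policy pi /\
  forall pi', is_policy pi' -> forall s, reg_value P gamma tau rw pi' s <= reg_value P gamma tau rw pi s.

Definition rmax (rw : S -> A -> R) : R := \big[Num.max/0]_(sa : S * A) rw sa.1 sa.2.

End MDP.

Definition norm2 {R : realType} {m : nat} (x : 'I_m -> R) : R :=
  Num.sqrt (\sum_(i < m) x i ^+ 2).

(* Main.v *)
Require Import Defs.
From HB Require Import structures.
From mathcomp Require Import all_boot all_order all_algebra.
From mathcomp Require Import all_classical all_reals all_analysis.
From mathcomp Require Import lra ring.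
Import Order.TTheory GRing.Theory Num.Theory.
Import numFieldNormedType.Exports.
Local Open Scope ring_scope.

Lemma core_exp (R : realType) (x : R) : 0 <= x ->
  2 * (expR x - 1) <= x * (expR x + 1).
Proof.
move=> x0; rewrite -subr_ge0.
have [->|xpos] := eqVneq x 0; first by rewrite expR0 mul0r subrr mulr0 subrr.
have xp : 0 < x by rewrite lt_neqAle eq_sym xpos x0.
pose f := fun y : R => y * expR y + y - 2 * expR y.
pose df := fun y : R => (expR y + y * expR y) + 1 - 2 * expR y.
have hd : forall y : R, is_derive y 1 f (df y).
  move=> y; rewrite /f /df.
  apply: is_derive_eq.
  by rewrite /GRing.scale/= mulr1 (addrC (y * _)).
have hc : {within `[0, x], continuous f}%classic.
  apply: derivable_within_continuous => y _.
  by case: (hd y).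
have [c /[!in_itv]/= /andP[c0 cx]] := MVT xp (fun y _ => hd y) hc.
rewrite /f expR0 !mul0r add0r sub0r mulr1 opprK subr0 => /eqP.
move=> /eqP E.
have : 0 <= df c * x.
  apply: mulr_ge0 (ltW xp).
  rewrite /df.
  have := expR_ge1Dx (- c); rewrite expRN.
  have ec := expR_gt0 c.
  rewrite -(ler_pM2r ec) mulVf ?gt_eqF // => h.
  nra.
lra.
Qed.
Lemma log_term (R : realType) (a b : R) : 0 < a -> 0 < b ->
  2 * (a - b) ^+ 2 <= (a - b) * (ln a - ln b) * (a + b).
Proof.
wlog ab : a b / b <= a.
  move=> H a0 b0; have [ba|/ltW ab] := leP b a; first exact: H.
  have := H b a ab b0 a0.
  have -> : (b - a) ^+ 2 = (a - b) ^+ 2 by rewrite -sqrrN opprB.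
  have -> : (b - a) * (ln b - ln a) * (b + a) = (a - b) * (ln a - ln b) * (a + b) by ring.
  by [].
move=> a0 b0.
pose x := ln a - ln b.
have x0 : 0 <= x by rewrite /x subr_ge0 ler_ln ?posrE.
have ea : a = b * expR x.
  by rewrite /x expRB !lnK ?posrE // mulrC divfK ?gt_eqF.
rewrite -/x ea.
have := @core_exp R x x0.
have ex := expR_gt0 x.
have ex1 : 1 <= expR x by rewrite -expR0 ler_expR.
move=> h.
have h2 : 0 <= (expR x - 1) * (x * (expR x + 1) - 2 * (expR x - 1)).
  apply: mulr_ge0; lra.
have bb : 0 <= b ^+ 2 by rewrite sqr_ge0.
have := mulr_ge0 bb h2.
move=> h3.
rewrite -subr_ge0.
suff -> : (b * expR x - b) * x * (b * expR x + b) - 2 * (b * expR x - b) ^+ 2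
   = b ^+ 2 * ((expR x - 1) * (x * (expR x + 1) - 2 * (expR x - 1))) by [].
ring.
Qed.
Lemma cs_ineq (R : realType) (I : finType) (u v : I -> R) :
  (\sum_i u i * v i) ^+ 2 <= (\sum_i u i ^+ 2) * (\sum_i v i ^+ 2).
Proof.
set U := \sum_i u i ^+ 2; set V := \sum_i v i ^+ 2; set C := \sum_i u i * v i.
have V0 : 0 <= V by apply: sumr_ge0 => i _; exact: sqr_ge0.
have key : 0 <= V * (V * U - C ^+ 2).
  have : 0 <= \sum_i (u i * V - C * v i) ^+ 2 by apply: sumr_ge0 => i _; exact: sqr_ge0.
  have -> : \sum_i (u i * V - C * v i) ^+ 2 =
      V ^+ 2 * U - 2 * V * C * C + C ^+ 2 * V.
    rewrite (eq_bigr (fun i => V ^+ 2 * u i ^+ 2 - 2 * V * C * (u i * v i) + C ^+ 2 * v i ^+ 2)); last by move=> i _; ring.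
    by rewrite big_split sumrB /= -!mulr_sumr.
  move=> h; suff -> : V * (V * U - C ^+ 2) = V ^+ 2 * U - 2 * V * C * C + C ^+ 2 * V by [].
  ring.
have [V00|Vp] := eqVneq V 0.
  have v0 : forall i, v i = 0.
    move=> i; apply/eqP; rewrite -sqrf_eq0; apply/eqP.
    by move/eqP: V00; rewrite psumr_eq0 => [/allP /(_ i) /= /(_ (mem_index_enum _)) /eqP|j _]; [|exact: sqr_ge0].
  rewrite /C big1 ?expr0n /=; last by move=> i _; rewrite v0 mulr0.
  by rewrite mulr_ge0 // sumr_ge0 // => i _; rewrite sqr_ge0.
have Vpos : 0 < V by rewrite lt_neqAle eq_sym Vp V0.
rewrite -subr_ge0 mulrC.
by rewrite pmulr_rge0 in key.
Qed.

Lemma wcs_ineq (R : realType) (I : finType) (u w : I -> R) :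
  (forall i, 0 < w i) ->
  (\sum_i u i) ^+ 2 <= (\sum_i u i ^+ 2 / w i) * (\sum_i w i).
Proof.
move=> wp.
set U := \sum_i u i; set W := \sum_i w i; set T := \sum_i u i ^+ 2 / w i.
have W0 : 0 <= W by apply: sumr_ge0 => i _; exact: ltW.
have key : 0 <= W * (W * T - U ^+ 2).
  have : 0 <= \sum_i (u i * W - U * w i) ^+ 2 / w i.
    by apply: sumr_ge0 => i _; rewrite divr_ge0 ?sqr_ge0 // ltW.
  have -> : \sum_i (u i * W - U * w i) ^+ 2 / w i =
      W ^+ 2 * T - 2 * W * U * U + U ^+ 2 * W.
    rewrite (eq_bigr (fun i => W ^+ 2 * (u i ^+ 2 / w i) - 2 * W * U * u i + U ^+ 2 * w i)); last first.
      move=> i _; have wi : w i != 0 by rewrite gt_eqF.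
      by field.
    by rewrite big_split sumrB /= -!mulr_sumr.
  move=> h; suff -> : W * (W * T - U ^+ 2) = W ^+ 2 * T - 2 * W * U * U + U ^+ 2 * W by [].
  ring.
have [W00|Wp] := eqVneq W 0.
  rewrite /U big1 ?expr0n /=; last first.
    move=> i _; move/eqP: W00; rewrite psumr_eq0 => [/allP /(_ i) /= /(_ (mem_index_enum _)) /eqP wi0|j _].
      by have := wp i; rewrite wi0 ltxx.
    exact: ltW.
  by rewrite mulr_ge0 // sumr_ge0 // => i _; rewrite divr_ge0 ?sqr_ge0 // ltW.
have Wpos : 0 < W by rewrite lt_neqAle eq_sym Wp W0.
rewrite -subr_ge0 mulrC.
by rewrite pmulr_rge0 in key.
Qed.
Lemma ln_le_subr1 (R : realType) (y : R) : 0 < y -> ln y <= y - 1.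
Proof.
move=> y0; have := @le_ln1Dx R (y - 1).
have -> : 1 + (y - 1) = y by ring.
by apply; lra.
Qed.

Lemma gibbs_term (R : realType) (p s : R) : 0 <= p -> 0 < s ->
  p * (ln s - ln p) <= 2 * (Num.sqrt s * Num.sqrt p - p).
Proof.
move=> p0 s0.
have [->|pn0] := eqVneq p 0; first by rewrite mul0r sqrtr0 mulr0 subrr mulr0.
have pp : 0 < p by rewrite lt_neqAle eq_sym pn0 p0.
set a := Num.sqrt s; set b := Num.sqrt p.
have ap : 0 < a by rewrite sqrtr_gt0.
have bp : 0 < b by rewrite sqrtr_gt0.
have ea : s = a ^+ 2 by rewrite sqr_sqrtr // ltW.
have eb : p = b ^+ 2 by rewrite sqr_sqrtr.
have hy := @ln_le_subr1 R (a / b) (divr_gt0 ap bp).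
rewrite ln_div ?posrE // in hy.
rewrite [in ln s]ea [in ln p]eb !lnXn //.
have bb : 0 < b ^+ 2 by rewrite exprn_gt0.
have : b ^+ 2 * (ln a - ln b) <= b ^+ 2 * (a / b - 1) by rewrite ler_pM2l.
have -> : b ^+ 2 * (a / b - 1) = a * b - b ^+ 2.
  by field; rewrite gt_eqF.
rewrite eb.
have -> : b ^+ 2 * (ln a *+ 2 - ln b *+ 2) = 2 * (b ^+ 2 * (ln a - ln b)).
  by rewrite -mulrnBl -mulr_natl; ring.
move=> h; lra.
Qed.
Section Softmax.
Variables (R : realType) (A : finType) (tau : R).
Hypothesis tau0 : 0 < tau.

Definition lse (q : A -> R) : R := \sum_a expR (q a / tau).
Definition softmax (q : A -> R) (a : A) : R := expR (q a / tau) / lse q.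

Lemma lse_gt0 (q : A -> R) (a0 : A) : 0 < lse q.
Proof.
rewrite /lse (bigD1 a0) //= ltr_pwDl ?expR_gt0 //.
by apply: sumr_ge0 => a _; exact: expR_ge0.
Qed.

Lemma softmax_gt0 q a : 0 < softmax q a.
Proof. by rewrite /softmax divr_gt0 ?expR_gt0 // (lse_gt0 _ a). Qed.

Lemma softmax_sum1 q (a0 : A) : \sum_a softmax q a = 1.
Proof.
rewrite /softmax -mulr_suml divff //.
by rewrite gt_eqF // (lse_gt0 _ a0).
Qed.

Lemma ln_softmax q a : ln (softmax q a) = q a / tau - ln (lse q).
Proof.
by rewrite /softmax ln_div ?posrE ?expR_gt0 ?(lse_gt0 _ a) // expRK.
Qed.

Lemma gibbs_eq q (a0 : A) :
  \sum_a softmax q a * (q a - tau * ln (softmax q a)) = tau * ln (lse q).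
Proof.
under eq_bigr => a _ do rewrite ln_softmax.
rewrite (eq_bigr (fun a => softmax q a * (tau * ln (lse q)))); last first.
  move=> a _; congr (_ * _); field; by rewrite gt_eqF.
by rewrite -big_distrl /= softmax_sum1 // mul1r.
Qed.

Lemma gibbs (q p : A -> R) :
  (forall a, 0 <= p a) -> \sum_a p a = 1 ->
  \sum_a p a * (q a - tau * ln (p a))
    + tau * \sum_a (Num.sqrt (softmax q a) - Num.sqrt (p a)) ^+ 2
  <= tau * ln (lse q).
Proof.
move=> p0 p1.
have [a0 _] : exists a0 : A, true.
  case: (pickP A) => [a0 _|h]; first by exists a0.
  by move: p1; rewrite big_pred0 // => /eqP; rewrite eq_sym oner_eq0.
set L := ln (lse q).
have e1 : \sum_a p a * (q a - tau * ln (p a)) =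
    tau * L + tau * \sum_a p a * (ln (softmax q a) - ln (p a)).
  rewrite mulr_sumr.
  rewrite (eq_bigr (fun a => p a * (tau * L) + tau * (p a * (ln (softmax q a) - ln (p a))))); last first.
    move=> a _; rewrite ln_softmax /L; field; by rewrite gt_eqF.
  by rewrite big_split /= -mulr_suml p1 mul1r.
have e2 : \sum_a (Num.sqrt (softmax q a) - Num.sqrt (p a)) ^+ 2 =
    2 - 2 * \sum_a Num.sqrt (softmax q a) * Num.sqrt (p a).
  rewrite (eq_bigr (fun a => softmax q a + p a - 2 * (Num.sqrt (softmax q a) * Num.sqrt (p a)))); last first.
    move=> a _; rewrite sqrrB !sqr_sqrtr ?p0 ?(ltW (softmax_gt0 _ _)) //; ring.
  by rewrite sumrB big_split /= softmax_sum1 // p1 -mulr_sumr.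
have h : \sum_a p a * (ln (softmax q a) - ln (p a)) <=
    2 * \sum_a Num.sqrt (softmax q a) * Num.sqrt (p a) - 2.
  apply: (le_trans (ler_sum _ (fun a _ => @gibbs_term R (p a) (softmax q a) (p0 a) (softmax_gt0 q a)))).
  by rewrite -mulr_sumr sumrB p1 mulrBr mulr1.
rewrite e1 e2.
have := ler_wpM2l (ltW tau0) h.
lra.
Qed.

Lemma lse_lip1 (q q' : A -> R) (e : R) (a0 : A) : (forall a, `|q a - q' a| <= e) ->
  tau * ln (lse q) <= tau * ln (lse q') + e.
Proof.
move=> he.
have h1 : lse q <= lse q' * expR (e / tau).
  rewrite /lse mulr_suml; apply: ler_sum => a _.
  rewrite -expRD ler_expR -mulrDl ler_pM2r ?invr_gt0 //.
  by have := he a; rewrite ler_norml; lra.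
have := lse_gt0 q a0; have := lse_gt0 q' a0; move=> l0 l0'.
have : ln (lse q) <= ln (lse q' * expR (e / tau)).
  by rewrite ler_ln ?posrE ?mulr_gt0 ?expR_gt0.
rewrite lnM ?posrE ?expR_gt0 // expRK => h.
have := ler_wpM2l (ltW tau0) h.
by rewrite mulrDr mulrCA divff ?gt_eqF // mulr1.
Qed.

Lemma lse_lip (q q' : A -> R) (e : R) (a0 : A) : (forall a, `|q a - q' a| <= e) ->
  `|tau * ln (lse q) - tau * ln (lse q')| <= e.
Proof.
move=> he; rewrite ler_norml.
have h1 := @lse_lip1 q q' e a0 he.
have h2 : tau * ln (lse q') <= tau * ln (lse q) + e.
  by apply: (@lse_lip1 q' q e a0) => a; rewrite distrC.
lra.
Qed.

Lemma softmax_tv (q q' : A -> R) (e : R) (a0 : A) : (forall a, `|q a - q' a| <= e) ->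
  \sum_a `|softmax q a - softmax q' a| <= e / tau.
Proof.
move=> he.
set p := softmax q; set p' := softmax q'.
set T := \sum_a `|p a - p' a|.
have e0 : 0 <= e by exact: le_trans (normr_ge0 _) (he a0).
have T0 : 0 <= T by apply: sumr_ge0 => a _.
set J := \sum_a (p a - p' a) * (ln (p a) - ln (p' a)).
have hJ1 : J <= T * (e / tau).
  have -> : J = \sum_a (p a - p' a) * ((q a - q' a) / tau)
      - (ln (lse q) - ln (lse q')) * \sum_a (p a - p' a).
    rewrite mulr_sumr -sumrB; apply: eq_bigr => a _.
    rewrite /p /p' !ln_softmax; field; by rewrite gt_eqF.
  rewrite sumrB /p /p' !softmax_sum1 // subrr mulr0 subr0.
  rewrite mulr_suml; apply: ler_sum => a _.
  apply: (le_trans (ler_norm _)).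
  rewrite normrM ler_wpM2l // normrM (@ger0_norm _ tau^-1) ?invr_ge0 ?(ltW tau0) //.
  by rewrite ler_pM2r ?invr_gt0.
have hJ2 : T ^+ 2 <= J.
  have hw : forall a, 0 < p a + p' a by move=> a; rewrite addr_gt0 ?softmax_gt0.
  apply: (le_trans (@wcs_ineq R A (fun a => `|p a - p' a|) _ hw)).
  rewrite big_split /= /p /p' !softmax_sum1 // -/p -/p'.
  rewrite mulr_suml /J; apply: ler_sum => a _.
  rewrite real_normK ?num_real // -mulrA mulrC -mulrA ler_pdivrMl ?hw //.
  have := @log_term R (p a) (p' a) (softmax_gt0 _ _) (softmax_gt0 _ _).
  by rewrite [_ * (p a + p' a)]mulrC.  
have : T * T <= T * (e / tau) by rewrite -expr2; exact: le_trans hJ2 hJ1.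
have [->|Tp] := eqVneq T 0; first by rewrite divr_ge0 // ltW.
by rewrite ler_pM2l // lt_neqAle eq_sym Tp T0.
Qed.
End Softmax.
Lemma cvg_finsum (R : realType) (I : finType) (f : I -> nat -> R) (l : I -> R) :
  (forall i, f i n @[n --> \oo] --> l i)%classic ->
  ((\sum_i f i n) @[n --> \oo] --> \sum_i l i)%classic.
Proof.
move=> hf; rewrite /index_enum; elim: (Finite.enum I) => [|i r IH].
  under eq_cvg do rewrite big_nil.
  by rewrite big_nil; exact: cvg_cst.
under eq_cvg do rewrite big_cons.
by rewrite big_cons; apply: cvgD => //; exact: hf.
Qed.

Lemma le_sum_elem (R : realType) (I : finType) (F : I -> R) (j : I) :
  (forall i, 0 <= F i) -> F j <= \sum_i F i.
Proof.
move=> h; rewrite (bigD1 j) //= lerDl; apply: sumr_ge0 => i _; exact: h.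
Qed.

Section MDPproof.
Variables (R : realType) (S A : finType) (P : S -> A -> S -> R) (gamma tau : R).
Hypotheses (HP : is_kernel P) (g0 : 0 < gamma) (g1 : gamma < 1) (tau0 : 0 < tau).
Implicit Types (pi rw : S -> A -> R) (s : S) (a : A).

Definition Mk (pi : S -> A -> R) s s1 := \sum_a pi s a * P s a s1.

Lemma Mk_ge0 pi s s1 : is_policy pi -> 0 <= Mk pi s s1.
Proof.
case=> p0 _; apply: sumr_ge0 => a _; apply: mulr_ge0 => //; exact: HP.1.
Qed.

Lemma Mk_sum1 pi s : is_policy pi -> \sum_s1 Mk pi s s1 = 1.
Proof.
case=> _ p1; rewrite /Mk exchange_big /= -(p1 s); apply: eq_bigr => a _.
by rewrite -mulr_sumr HP.2 mulr1.
Qed.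

Lemma dist_fwd pi t s0 s' :
  state_dist P pi s0 t.+1 s' = \sum_s state_dist P pi s0 t s * Mk pi s s'.
Proof. by []. Qed.

Lemma dist_back pi t s0 s' :
  state_dist P pi s0 t.+1 s' = \sum_s1 Mk pi s0 s1 * state_dist P pi s1 t s'.
Proof.
elim: t s' => [|t IH] s'.
  rewrite /= (bigD1 s0) //= eqxx mul1r [X in _ + X]big1 ?addr0; last first.
    by move=> s /negbTE ->; rewrite mul0r.
  rewrite (bigD1 s') //= eqxx mulr1 [X in _ + X]big1 ?addr0 //.
  by move=> s1 ne; rewrite eq_sym (negbTE ne) mulr0.
rewrite dist_fwd.
under eq_bigr do rewrite IH mulr_suml.
rewrite exchange_big; apply: eq_bigr => s1 _.
by rewrite dist_fwd mulr_sumr; apply: eq_bigr => s _; rewrite mulrA.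
Qed.

Lemma dist_ge0 pi s0 t s : is_policy pi -> 0 <= state_dist P pi s0 t s.
Proof.
move=> hp; elim: t s => [|t IH] s; first by rewrite /=; case: ifP.
rewrite dist_fwd; apply: sumr_ge0 => s1 _; apply: mulr_ge0 => //; exact: Mk_ge0.
Qed.

Lemma dist_sum1 pi s0 t : is_policy pi -> \sum_s state_dist P pi s0 t s = 1.
Proof.
move=> hp; elim: t => [|t IH].
  rewrite /= (bigD1 s0) //= eqxx [X in _ + X]big1 ?addr0 //.
  by move=> s /negbTE ->.
under eq_bigr do rewrite dist_fwd.
rewrite exchange_big /= -IH; apply: eq_bigr => s _.
by rewrite -mulr_sumr (Mk_sum1 _ _ hp) mulr1.
Qed.

Definition term rw pi s0 t :=
  gamma ^+ t * \sum_s state_dist P pi s0 t s * reg_reward tau rw pi s.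

Lemma policy_le1 pi s a : is_policy pi -> pi s a <= 1.
Proof. by case=> p0 p1; rewrite -(p1 s); apply: le_sum_elem. Qed.

Lemma reg_reward_ge0 rw pi s : is_policy pi -> (forall s a, 0 <= rw s a) ->
  0 <= reg_reward tau rw pi s.
Proof.
move=> hp hr; apply: sumr_ge0 => a _; apply: mulr_ge0; first exact: hp.1.
have := ln_le0 (@policy_le1 pi s a hp).
have := hr s a.
have := ltW tau0.
nra.
Qed.

Lemma term_succ rw pi s0 t :
  term rw pi s0 t.+1 = gamma * \sum_s1 Mk pi s0 s1 * term rw pi s1 t.
Proof.
rewrite /term.
under eq_bigr do rewrite dist_back mulr_suml.
rewrite exchange_big /= exprS -mulrA; congr (_ * _).
rewrite mulr_sumr; apply: eq_bigr => s1 _.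
rewrite mulrCA; congr (_ * _); rewrite mulr_sumr; apply: eq_bigr => s _.
by rewrite mulrA.
Qed.

Lemma term0 rw pi s0 : term rw pi s0 0 = reg_reward tau rw pi s0.
Proof.
rewrite /term expr0 mul1r /= (bigD1 s0) //= eqxx mul1r [X in _ + X]big1 ?addr0 //.
by move=> s /negbTE ->; rewrite mul0r.
Qed.

Lemma series_succ rw pi s0 n :
  series (term rw pi s0) n.+1 = reg_reward tau rw pi s0
    + gamma * \sum_s1 Mk pi s0 s1 * series (term rw pi s1) n.
Proof.
rewrite /series /= big_nat_recl // term0; congr (_ + _).
under eq_bigr do rewrite term_succ.
rewrite -mulr_sumr; congr (_ * _).
rewrite exchange_big /=; apply: eq_bigr => s1 _.
by rewrite mulr_sumr.
Qed.

Lemma term_ge0 rw pi s0 t : is_policy pi -> (forall s a, 0 <= rw s a) ->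
  0 <= term rw pi s0 t.
Proof.
move=> hp hr; rewrite /term mulr_ge0 ?exprn_ge0 ?(ltW g0) //.
apply: sumr_ge0 => s _; apply: mulr_ge0; first exact: dist_ge0.
exact: reg_reward_ge0.
Qed.

Lemma geom_sum n : \sum_(0 <= k < n) gamma ^+ k * (1 - gamma) = 1 - gamma ^+ n.
Proof.
elim: n => [|n IH]; first by rewrite big_geq // expr0 subrr.
by rewrite big_nat_recr //= IH exprS; ring.
Qed.

Lemma series_cvg rw pi s0 : is_policy pi -> (forall s a, 0 <= rw s a) ->
  cvgn (series (term rw pi s0)).
Proof.
move=> hp hr.
set B := \sum_s reg_reward tau rw pi s.
have B0 : 0 <= B by apply: sumr_ge0 => s _; exact: reg_reward_ge0.
apply: nondecreasing_is_cvgn.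
  apply/nondecreasing_seqP => n; rewrite /series /= big_nat_recr //= lerDl.
  exact: term_ge0.
exists (B / (1 - gamma)) => _ [n _ <-].
have h1 : series (term rw pi s0) n <= B * \sum_(0 <= k < n) gamma ^+ k.
  rewrite /series /= mulr_sumr; apply: ler_sum => k _.
  rewrite /term mulrC ler_wpM2r ?exprn_ge0 ?(ltW g0) //.
  apply: (@le_trans _ _ (\sum_s state_dist P pi s0 k s * B)).
    apply: ler_sum => s _; apply: ler_wpM2l; first exact: dist_ge0.
    apply: le_sum_elem => s1; exact: reg_reward_ge0.
  by rewrite -mulr_suml dist_sum1 // mul1r.
apply: (le_trans h1); rewrite ler_wpM2l // -div1r ler_pdivlMr ?subr_gt0 //.
rewrite mulr_suml geom_sum; have := exprn_ge0 n (ltW g0); lra.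
Qed.

Lemma bellman rw pi s0 : is_policy pi -> (forall s a, 0 <= rw s a) ->
  reg_value P gamma tau rw pi s0 = reg_reward tau rw pi s0
    + gamma * \sum_s1 Mk pi s0 s1 * reg_value P gamma tau rw pi s1.
Proof.
move=> hp hr.
have hc := fun s => @series_cvg rw pi s hp hr.
have h1 : (series (term rw pi s0) n.+1 @[n --> \oo] --> reg_value P gamma tau rw pi s0)%classic.
  by rewrite (cvg_shiftS (series (term rw pi s0))); exact: hc.
have h2 : ((reg_reward tau rw pi s0 + gamma * \sum_s1 Mk pi s0 s1 * series (term rw pi s1) n)
   @[n --> \oo] --> reg_reward tau rw pi s0
    + gamma * \sum_s1 Mk pi s0 s1 * reg_value P gamma tau rw pi s1)%classic.
  apply: cvgD; first exact: cvg_cst.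
  apply: cvgM; first exact: cvg_cst.
  apply: cvg_finsum => s1; apply: cvgM; first exact: cvg_cst.
  exact: hc.
have e : (fun n => series (term rw pi s0) n.+1) = (fun n =>
   reg_reward tau rw pi s0 + gamma * \sum_s1 Mk pi s0 s1 * series (term rw pi s1) n).
  by apply/funext => n; exact: series_succ.
rewrite e in h1.
exact: (cvg_unique _ h1 h2).
Qed.

End MDPproof.
Section Optimal.
Variables (R : realType) (S A : finType) (P : S -> A -> S -> R) (gamma tau : R).
Hypotheses (HP : is_kernel P) (g0 : 0 < gamma) (g1 : gamma < 1) (tau0 : 0 < tau).
Implicit Types (pi rw : S -> A -> R) (s : S) (a : A).

Lemma min_bound (X b : S -> R) (K : S -> S -> R) :
  (forall s s1, 0 <= K s s1) -> (forall s, \sum_s1 K s s1 = 1) ->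
  (forall s, 0 <= b s) -> (forall s, X s = b s + gamma * \sum_s1 K s s1 * X s1) ->
  forall s, b s <= X s.
Proof.
move=> K0 K1 b0 hX s.
have [smin _ hmin] := @arg_minP _ _ _ s xpredT X isT.
have lo : forall s', X smin <= \sum_s1 K s' s1 * X s1.
  move=> s'; rewrite -[X smin]mul1r -(K1 s') mulr_suml.
  by apply: ler_sum => s1 _; apply: ler_wpM2l => //; exact: hmin.
have xm : 0 <= X smin.
  have := hX smin; have := lo smin; have := b0 smin.
  move=> h1 h2 h3.
  have : gamma * X smin <= gamma * \sum_s1 K smin s1 * X s1 by rewrite ler_wpM2l // ltW.
  move=> h4; have gp : 0 < 1 - gamma by rewrite subr_gt0.
  rewrite -(pmulr_rge0 _ gp) mulrBl mul1r; lra.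
have := hX s; have := lo s; have := b0 s.
move=> h1 h2 h3.
have : gamma * X smin <= gamma * \sum_s1 K s s1 * X s1 by rewrite ler_wpM2l // ltW.
have := mulr_ge0 (ltW g0) xm; lra.
Qed.

Definition Qf rw pi s a :=
  rw s a + gamma * \sum_s1 P s a s1 * reg_value P gamma tau rw pi s1.

Lemma swapPV (p : S -> A -> R) (f : S -> R) s :
  \sum_s1 Mk R S A P p s s1 * f s1 = \sum_a p s a * \sum_s1 P s a s1 * f s1.
Proof.
rewrite /Mk; under eq_bigr do rewrite mulr_suml.
rewrite exchange_big; apply: eq_bigr => a _; rewrite mulr_sumr.
by apply: eq_bigr => s1 _; rewrite mulrA.
Qed.

Lemma bellmanQ rw pi s : is_policy pi -> (forall s a, 0 <= rw s a) ->
  reg_value P gamma tau rw pi s = \sum_a pi s a * (Qf rw pi s a - tau * ln (pi s a)).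
Proof.
move=> hp hr.
rewrite (@bellman R S A P gamma tau HP g0 g1 tau0 rw pi s hp hr) swapPV /reg_reward /Qf.
rewrite mulr_sumr -big_split; apply: eq_bigr => a _ /=; ring.
Qed.

Lemma opt_char rw pi : (forall s a, 0 <= rw s a) -> reg_optimal P gamma tau rw pi ->
  forall s, (forall a, pi s a = softmax R A tau (Qf rw pi s) a) /\
    reg_value P gamma tau rw pi s = tau * ln (lse R A tau (Qf rw pi s)).
Proof.
move=> hr [hp hopt] s0.
have [a0 _] : exists a0 : A, true.
  case: (pickP A) => [a0 _|h]; first by exists a0.
  by move: (hp.2 s0); rewrite big_pred0 // => /eqP; rewrite eq_sym oner_eq0.
set V := reg_value P gamma tau rw pi.
set Q := Qf rw pi.
pose sig s a := softmax R A tau (Q s) a.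
have hsig : is_policy sig.
  split => [s a|s]; first exact: ltW (softmax_gt0 _ _ _ _ _).
  exact: softmax_sum1.
set W := reg_value P gamma tau rw sig.
pose b s := tau * ln (lse R A tau (Q s)) - V s.
have hb : forall s, tau * \sum_a (Num.sqrt (sig s a) - Num.sqrt (pi s a)) ^+ 2 <= b s.
  move=> s; have := @gibbs R A tau tau0 (Q s) (pi s) (fun a => hp.1 s a) (hp.2 s).
  rewrite /b /V (@bellmanQ rw pi s hp hr) -/Q; lra.
have sq0 : forall s, 0 <= \sum_a (Num.sqrt (sig s a) - Num.sqrt (pi s a)) ^+ 2.
  by move=> s; apply: sumr_ge0 => a _; exact: sqr_ge0.
have b0 : forall s, 0 <= b s.
  move=> s; apply: le_trans (hb s); exact: mulr_ge0 (ltW tau0) (sq0 s).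
have hX : forall s, W s - V s = b s + gamma * \sum_s1 Mk R S A P sig s s1 * (W s1 - V s1).
  move=> s.
  rewrite {1}/W (@bellman R S A P gamma tau HP g0 g1 tau0 rw sig s hsig hr).
  have eg : reg_reward tau rw sig s =
      tau * ln (lse R A tau (Q s)) - gamma * \sum_s1 Mk R S A P sig s s1 * V s1.
    rewrite -(@gibbs_eq R A tau tau0 (Q s) a0) swapPV /reg_reward /Q /Qf.
    rewrite mulr_sumr -sumrB; apply: eq_bigr => a _ /=; rewrite /sig /Q; ring.
  rewrite eg /b.
  have -> : \sum_s1 Mk R S A P sig s s1 * (W s1 - V s1) =
     \sum_s1 Mk R S A P sig s s1 * W s1 - \sum_s1 Mk R S A P sig s s1 * V s1.
    by rewrite -sumrB; apply: eq_bigr => s1 _; rewrite mulrBr.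
  rewrite /W; ring.
have hmb := @min_bound (fun s => W s - V s) b (Mk R S A P sig)
   (fun s s1 => @Mk_ge0 R S A P HP sig s s1 hsig) (fun s => @Mk_sum1 R S A P HP sig s hsig) b0 hX s0.
have hop := hopt sig hsig s0.
have hbs : b s0 = 0.
  apply/eqP; rewrite eq_le b0 andbT; move: hmb hop; rewrite /W /V => hmb hop; lra.
have hsq : \sum_a (Num.sqrt (sig s0 a) - Num.sqrt (pi s0 a)) ^+ 2 = 0.
  apply/eqP; rewrite eq_le sq0 andbT.
  have := hb s0; rewrite hbs => h.
  by rewrite -(pmulr_rle0 _ tau0).
split; last by move: hbs; rewrite /b; lra.
move=> a.
move/eqP: hsq; rewrite psumr_eq0 => [/allP /(_ a) /= /(_ (mem_index_enum _))|a1 _]; last exact: sqr_ge0.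
rewrite sqrf_eq0 subr_eq0 => /eqP e.
rewrite -[pi s0 a]sqr_sqrtr ?(hp.1 s0 a) // -e sqr_sqrtr //.
exact: ltW (softmax_gt0 _ _ _ _ _).
Qed.

End Optimal.
Lemma le_bigmax_seq (R : realType) (I : eqType) (r : seq I) (F : I -> R) z x :
  x \in r -> F x <= \big[Num.max/z]_(i <- r) F i.
Proof.
elim: r => //= i r IH; rewrite inE big_cons => /orP[/eqP->|xr].
  by rewrite le_max lexx.
by rewrite le_max (IH xr) orbT.
Qed.

Lemma rmax_ge (R : realType) (S A : finType) (rw : S -> A -> R) s a :
  rw s a <= rmax rw.
Proof.
rewrite /rmax; apply: (@le_bigmax_seq R _ _ (fun sa : S * A => rw sa.1 sa.2) 0 (s, a)).
exact: mem_index_enum.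
Qed.

Lemma cs_norm2 (R : realType) (m : nat) (u v : 'I_m -> R) :
  \sum_i u i * v i <= norm2 u * norm2 v.
Proof.
rewrite /norm2 -sqrtrM ?sumr_ge0 // => [|i _]; last exact: sqr_ge0.
apply: (le_trans (ler_norm _)).
rewrite -sqrtr_sqr ler_sqrt; first exact: cs_ineq.
by rewrite mulr_ge0 // sumr_ge0 // => i _; exact: sqr_ge0.
Qed.

Theorem lemma5 (R : realType) (S A : finType) (P : S -> A -> S -> R) (gamma : R)
  (m : nat) (r0 : S -> A -> R) (r : 'I_m -> S -> A -> R) :
  is_kernel P -> 0 < gamma -> gamma < 1 ->
  (forall s a, 0 < r0 s a) -> (forall i s a, 0 < r i s a) ->
  forall (tau : R) (lam lam' : 'I_m -> R) (pi pi' : S -> A -> R),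
  0 < tau -> (forall i, 0 <= lam i) -> (forall i, 0 <= lam' i) ->
  reg_optimal P gamma tau (rlam r0 r lam) pi ->
  reg_optimal P gamma tau (rlam r0 r lam') pi' ->
  forall s : S,
    \sum_(a : A) `|pi s a - pi' s a|
      <= norm2 (fun i => rmax (r i)) / ((1 - gamma) * tau) * norm2 (fun i => lam i - lam' i).
Proof.
move=> HP g0 g1 hr0 hr tau lam lam' pi pi' tau0 hl hl' hopt hopt' s.
have rw0 : forall (l : 'I_m -> R), (forall i, 0 <= l i) -> forall s a, 0 <= rlam r0 r l s a.
  move=> l hl0 s1 a; rewrite /rlam addr_ge0 ?(ltW (hr0 _ _)) //.
  by apply: sumr_ge0 => i _; rewrite mulr_ge0 ?hl0 ?(ltW (hr _ _ _)).
have [a0 _] : exists a0 : A, true.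
  case: (pickP A) => [a0 _|h]; first by exists a0.
  by move: (hopt.1.2 s); rewrite big_pred0 // => /eqP; rewrite eq_sym oner_eq0.
have C := @opt_char R S A P gamma tau HP g0 g1 tau0 _ _ (rw0 _ hl) hopt.
have C' := @opt_char R S A P gamma tau HP g0 g1 tau0 _ _ (rw0 _ hl') hopt'.
set rw := rlam r0 r lam in C; set rw' := rlam r0 r lam' in C'.
set V := reg_value P gamma tau rw pi in C; set V' := reg_value P gamma tau rw' pi' in C'.
set Q := Qf R S A P gamma tau rw pi in C; set Q' := Qf R S A P gamma tau rw' pi' in C'.
set K0 := norm2 (fun i => rmax (r i)) * norm2 (fun i => lam i - lam' i).
have hK : forall s a, `|rw s a - rw' s a| <= K0.
  move=> s1 a.
  have -> : rw s1 a - rw' s1 a = \sum_i (lam i - lam' i) * r i s1 a.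
    rewrite /rw /rw' /rlam [RHS](eq_bigr (fun i => lam i * r i s1 a - lam' i * r i s1 a)); last first.
      by move=> i _; rewrite mulrBl.
    rewrite sumrB; ring.
  apply: (le_trans (ler_norm_sum _ _ _)).
  apply: (@le_trans _ _ (\sum_i rmax (r i) * `|lam i - lam' i|)).
    apply: ler_sum => i _; rewrite normrM (gtr0_norm (hr _ _ _)) mulrC.
    by rewrite ler_wpM2r // rmax_ge.
  apply: (le_trans (@cs_norm2 R m (fun i => rmax (r i)) (fun i => `|lam i - lam' i|))).
  rewrite /K0 ler_wpM2l //; first by rewrite /norm2 sqrtr_ge0.
  rewrite /norm2 le_eqVlt; apply/orP; left; apply/eqP; congr (Num.sqrt _); apply: eq_bigr => i _.
  by rewrite real_normK ?num_real.
have [smax _ hmax] := @arg_maxP _ _ _ s xpredT (fun s => `|V s - V' s|) isT.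
set D := `|V smax - V' smax|.
have hQ : forall s a, `|Q s a - Q' s a| <= K0 + gamma * D.
  move=> s1 a.
  have -> : Q s1 a - Q' s1 a = (rw s1 a - rw' s1 a)
      + gamma * \sum_s2 P s1 a s2 * (V s2 - V' s2).
    rewrite /Q /Q' /Qf -/V -/V'.
    rewrite [X in _ = _ + _ * X](eq_bigr (fun s2 => P s1 a s2 * V s2 - P s1 a s2 * V' s2)); last first.
      by move=> s2 _; rewrite mulrBr.
    rewrite sumrB; ring.
  apply: (le_trans (ler_normD _ _)); apply: lerD; first exact: hK.
  rewrite normrM (gtr0_norm g0) ler_wpM2l ?(ltW g0) //.
  apply: (le_trans (ler_norm_sum _ _ _)).
  apply: (@le_trans _ _ (\sum_s2 P s1 a s2 * D)).
    apply: ler_sum => s2 _; rewrite normrM ger0_norm; last exact: HP.1.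
    by rewrite ler_wpM2l //; [exact: HP.1| exact: hmax].
  by rewrite -mulr_suml HP.2 mul1r.
have hV : forall s, `|V s - V' s| <= K0 + gamma * D.
  move=> s1; rewrite (C s1).2 (C' s1).2.
  exact: (@lse_lip R A tau tau0 (Q s1) (Q' s1) _ a0 (hQ s1)).
have hD : D <= K0 + gamma * D by exact: hV.
have gp : 0 < 1 - gamma by rewrite subr_gt0.
have hQ' : forall s a, `|Q s a - Q' s a| <= K0 / (1 - gamma).
  move=> s1 a; apply: (le_trans (hQ s1 a)).
  rewrite ler_pdivlMr //.
  have : gamma * ((1 - gamma) * D) <= gamma * K0.
    by rewrite ler_wpM2l ?(ltW g0) //; lra.
  nra.
have -> : \sum_a `|pi s a - pi' s a| =
    \sum_a `|softmax R A tau (Q s) a - softmax R A tau (Q' s) a|.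
  by apply: eq_bigr => a _; rewrite -(C s).1 -(C' s).1.
apply: (le_trans (@softmax_tv R A tau tau0 (Q s) (Q' s) _ a0 (hQ' s))).
rewrite /K0 le_eqVlt; apply/orP; left; apply/eqP.
field; rewrite ?gt_eqF //.
Qed.
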